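(* Let $c\colon[0,1]\to\mathbb{R}^n$ be a continuous curve and let $X$ be an open and dense subset of $\mathbb{R}^n$. Then there exists a dense set $A\subset\mathbb{R}^n$ (in fact a set of second Baire category) such that for each $\alpha\in A$ the set $F_\alpha:=\{t\in[0,1]\,:\, c(t)+\alpha\in X\}$ is open and dense in $[0,1]$. *)

(* Defs.v *)
From HB Require Import structures.
From mathcomp Require Import all_boot all_order all_algebra.
From mathcomp Require Import all_classical all_reals all_analysis.
Set Implicit Arguments. Unset Strict Implicit. Unset Printing Implicit Defensive.
Import Order.TTheory GRing.Theory Num.Theory.
Import numFieldNormedType.Exports.
Local Open Scope classical_set_scope.
Local Open Scope ring_scope.

Definition open_in (T : topologicalType) (Y S : set T) : Prop :=
  exists U : set T, open U /\ S = U `&` Y.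

Definition dense_in (T : topologicalType) (Y S : set T) : Prop :=
  S `<=` Y /\
  forall U : set T, open U -> (U `&` Y) !=set0 -> (U `&` S) !=set0.

Definition nowhere_dense (T : topologicalType) (S : set T) : Prop :=
  (closure S)° = set0.

Definition meager (T : topologicalType) (S : set T) : Prop :=
  exists F : (set T)^nat, (forall k, nowhere_dense (F k)) /\ S `<=` \bigcup_k F k.

Definition second_category (T : topologicalType) (S : set T) : Prop := ~ meager S.

(* Main.v *)
Require Import Defs.
From HB Require Import structures.
From mathcomp Require Import all_boot all_order all_algebra.
From mathcomp Require Import all_classical all_reals all_analysis.
From mathcomp Require Import lra.
Import Order.TTheory GRing.Theory Num.Theory.
Import numFieldNormedType.Exports.
Local Open Scope classical_set_scope.
Local Open Scope ring_scope.

HB.instance Definition _ (R : realType) (m n : nat) := Complete.on 'M[R]_(m, n).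

Lemma open_shift (R : realType) (V : normedModType R) (X : set V) (a : V) :
  open X -> open [set y | X (y + a)].
Proof.
move=> oX.
have := (continuousP (fun y : V => y + a)).1.
apply; last exact: oX.
move=> y; apply: (@continuousD R V V id (fun _ => a)) => //.
exact: cvg_cst.
Qed.

Lemma dense_shift (R : realType) (V : normedModType R) (X : set V) (a : V) :
  dense X -> dense [set y | X (a + y)].
Proof.
move=> dX O [y0 Oy0] oO.
have oO' : open [set z | O (z + - a)] by exact: open_shift.
have ne : [set z | O (z + - a)] !=set0.
  by exists (a + y0); rewrite /= addrAC subrr add0r.
have [z [Oz Xz]] := dX _ ne oO'.
exists (z - a); split => //=.
by rewrite addrC subrK.
Qed.

Lemma dense_sub (T : topologicalType) (S S' : set T) :
  dense S -> S `<=` S' -> dense S'.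
Proof.
move=> dS sS O O0 oO; have [x [Ox Sx]] := dS O O0 oO.
by exists x; split => //; apply: sS.
Qed.

Lemma dense_compl_closure (T : topologicalType) (F : set T) :
  nowhere_dense F -> dense (~` closure F).
Proof.
move=> nd O [x Ox] oO.
case: (pselect (O `&` ~` closure F !=set0)) => // nE; exfalso.
have Oc : O `<=` closure F.
  move=> y Oy; apply: contrapT => ncy; apply: nE; by exists y.
have : (closure F)° x.
  apply: (interiorS Oc); by rewrite (proj1 (interior_id O) oO).
by rewrite nd.
Qed.

Lemma ballRE (R : realType) (x e y : R) : ball x e y = (x - e < y < x + e).
Proof. by rewrite -ball_normE /= ltr_distlC. Qed.

Theorem lemma2p1 (R : realType) (n : nat) (c : R -> 'rV[R]_n)
    (X : set 'rV[R]_n) :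
  {within `[0, 1], continuous c} ->
  open X -> dense X ->
  exists A : set 'rV[R]_n,
    dense A /\ second_category A /\
    forall alpha : 'rV[R]_n, A alpha ->
      open_in (`[0, 1] : set R) [set t : R | t \in `[0, 1] /\ X (c t + alpha)] /\
      dense_in (`[0, 1] : set R) [set t : R | t \in `[0, 1] /\ X (c t + alpha)].
Proof.
move=> cc oX dX.
pose J (pq : rat * rat) := [set s : R | ratr pq.1 < s < ratr pq.2].
pose P pq := exists t : R, t \in `[0, 1] /\ J pq t.
pose B (k : nat) : set 'rV[R]_n :=
  match unpickle k with
  | Some pq => [set a | (exists t, (t \in `[0, 1] /\ J pq t) /\ X (c t + a))
                        \/ ~ P pq]
  | None => setT
  end.
have oB k : open (B k).
  rewrite /B; case: (unpickle k) => [pq|]; last exact: openT.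
  case: (pselect (P pq)) => Ppq.
    have -> : [set a | (exists t, (t \in `[0, 1] /\ J pq t) /\ X (c t + a))
                        \/ ~ P pq] =
              \bigcup_(t in [set t | t \in `[0, 1] /\ J pq t])
                 [set a | X (c t + a)].
      apply/seteqP; split => a /=.
        by case=> // -[t [Ht Xt]]; exists t.
      by case=> t Ht Xt; left; exists t.
    apply: bigcup_open => t _.
    under eq_set do rewrite addrC.
    exact: open_shift.
  have -> : [set a | (exists t, (t \in `[0, 1] /\ J pq t) /\ X (c t + a))
                        \/ ~ P pq] = setT.
    by apply/seteqP; split => a //= _; right.
  exact: openT.
have dB k : dense (B k).
  rewrite /B; case: (unpickle k) => [pq|]; last first.
    by move=> O [x Ox] _; exists x.
  case: (pselect (P pq)) => Ppq; last first.
    by apply: (@dense_sub _ setT); [move=> O [x Ox] _; exists x| move=> a _; right].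
  case: Ppq => t0 Ht0.
  apply: (@dense_sub _ [set y | X (c t0 + y)]); first exact: dense_shift.
  by move=> a Xa; left; exists t0.
pose A := \bigcap_k B k.
exists A; split; first exact: Baire.
split.
  move=> [F [nd cover]].
  pose H k := B k `&` ~` closure (F k).
  have oH k : open (H k) /\ dense (H k).
    split; first by apply: openI => //; apply: closed_openC; exact: closed_closure.
    apply: denseI => //; exact: dense_compl_closure.
  have /(_ setT (ex_intro _ 0 I) openT) [a [_ Ha]] := Baire oH.
  have Aa : A a by move=> k _; case: (Ha k I).
  case: (cover a Aa) => k _ Fka.
  by case: (Ha k I) => _; apply; apply: subset_closure.
move=> alpha Aalpha; split.
  have := (continuousP (from_subspace `[0, 1] c)).1 cc [set y | X (y + alpha)]
    (@open_shift _ _ _ alpha oX).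
  case/open_subspaceP => V oV VE.
  exists V; split => //.
  rewrite VE; apply/seteqP; split => t /=.
    by case=> It Xt; split.
  by case=> Xt It; split.
split; first by move=> t [].
move=> U oU [t [Ut It]].
have : nbhs t U by apply: open_nbhs_nbhs.
case/nbhs_ballP => r r0 rU.
have r20 : 0 < r / 2 by rewrite divr_gt0.
have [xp [Bp [p _ Ep]]] := @dense_rat R (ball (t - r / 2) (r / 2))
  (ex_intro _ (t - r / 2) (ballxx _ r20)) (ball_open _ _).
have [xq [Bq [q _ Eq]]] := @dense_rat R (ball (t + r / 2) (r / 2))
  (ex_intro _ (t + r / 2) (ballxx _ r20)) (ball_open _ _).
rewrite -Ep ballRE in Bp; rewrite -Eq ballRE in Bq.
have := Aalpha (pickle (p, q)) I; rewrite /B pickleK.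
case=> [[s [[Is Js] Xs]] | nP].
  exists s; split; last by split.
  apply: rU; rewrite ballRE; move: Js Bp Bq; rewrite /J /=.
  move=> /andP[J1 J2] /andP[P1 P2] /andP[Q1 Q2]; apply/andP; split; lra.
exfalso; apply: nP; exists t; split => //.
move: Bp Bq; rewrite /J /= => /andP[P1 P2] /andP[Q1 Q2]; apply/andP; split; lra.
Qed.
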